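(* Let $A$ be an $n\times n$ real matrix with spectrum $\{\lambda_1,\dots,\lambda_n\}$ (counting algebraic multiplicities). Suppose $\lambda_1$ is real with a real eigenvector $v$ having no zero components. Let $B=[b_{ij}]=S^{-1}AS$ with $S=\mathrm{diag}(v)$. (1) If $n$ is even, let $F=[b_{ij}-\beta_j]$, where $\beta_j$ is the $(n/2)$-th largest element among $b_{1j},\dots,b_{j-1,j},b_{j+1,j},\dots,b_{nj}$. Then $\lambda_i\in\Gamma(F)\cap\Gamma(F^T)$ for $i=2,\dots,n$. (2) If $n$ is odd with $n\ge 3$, let $\beta_j$ and $\gamma_j$ be, respectively, the negatives of the $\frac{n-1}{2}$-th and the $\frac{n+1}{2}$-th largest numbers among $b_{1j},\dots,b_{j-1,j},b_{j+1,j},\dots,b_{nj}$, and let $F=[b_{ij}+\beta_j]$, $G=[b_{ij}+\gamma_j]$. Then $\lambda_i\in\Gamma(F)\cap\Gamma(F^T)\cap\Gamma(G)\cap\Gamma(G^T)$ for $i=2,\dots,n$.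
   Context: For an $n\times n$ complex matrix $M=[m_{ij}]$, its Ostrowski–Brauer set is $$\Gamma(M)=\bigcup_{1\le i<j\le n}\Big\{y\in\mathbb{C}: |y-m_{ii}|\,|y-m_{jj}|\le \Big(\sum_{k\ne i}|m_{ik}|\Big)\Big(\sum_{k\ne j}|m_{jk}|\Big)\Big\}.$$ ''The $t$-th largest element'' of a list refers to the $t$-th entry of the list sorted in non-increasing order (with repetitions). *)

(* Defs.v *)
From HB Require Import structures.
From mathcomp Require Import all_boot all_order all_algebra.
From mathcomp Require Import complex.
Set Implicit Arguments. Unset Strict Implicit. Unset Printing Implicit Defensive.
Import Order.TTheory GRing.Theory Num.Theory.
Local Open Scope ring_scope.

Definition deleted_row_sum (C : numClosedFieldType) (n : nat) (M : 'M[C]_n)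
  (i : 'I_n) : C := \sum_(k < n | k != i) `|M i k|.

Definition ostrowski_brauer (C : numClosedFieldType) (n : nat) (M : 'M[C]_n)
  (y : C) : Prop :=
  exists i j : 'I_n, (i < j)%N /\
    `|y - M i i| * `|y - M j j| <= deleted_row_sum M i * deleted_row_sum M j.

(* t-th largest element (1-indexed) of a list: the t-th entry of the list
   sorted non-increasingly (with repetitions). *)
Definition tth_largest (R : realDomainType) (t : nat) (s : seq R) : R :=
  nth 0 (sort (fun x y : R => y <= x) s) t.-1.

Definition offdiag_col (R : Type) (n : nat) (B : 'M[R]_n) (j : 'I_n) : seq R :=
  [seq B i j | i <- enum 'I_n & i != j].

Definition cmx (R : rcfType) (m n : nat) (M : 'M[R]_(m, n)) : 'M[R[i]]_(m, n) :=
  map_mx (fun x => x%:C%C) M.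

(* Main.v *)
From HB Require Import structures.
From mathcomp Require Import all_boot all_order all_algebra.
From mathcomp Require Import complex ring.
Require Import Defs.
Import Order.TTheory GRing.Theory Num.Theory.
Local Open Scope ring_scope.

Section Rank1.
Variable (R0 : comNzRingType) (n : nat).
Local Notation N := n.+1.
Definition Tm : 'M[R0]_N := \matrix_(i, j) (if j == 0 then 1 else (i == j)%:R).
Definition Lm : 'M[R0]_N :=
  \matrix_(i, j) ((i == j)%:R - ((j == 0) && (i != 0))%:R).

Lemma mulTE (Y : 'M[R0]_N) i j :
  (Y *m Tm) i j = if j == 0 then \sum_k Y i k else Y i j.
Proof.
rewrite mxE; case: eqP => [->|/eqP nj].
  by apply: eq_bigr => k _; rewrite mxE eqxx mulr1.
rewrite (bigD1 j) //= big1 ?addr0; first by rewrite mxE (negPf nj) eqxx mulr1.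
by move=> k /negPf kj; rewrite mxE (negPf nj) kj mulr0.
Qed.

Lemma mulLE (Y : 'M[R0]_N) i j :
  (Lm *m Y) i j = Y i j - (i != 0)%:R * Y 0 j.
Proof.
rewrite mxE; have [->|ni] := eqVneq i 0.
  rewrite (bigD1 0) //= big1 ?addr0; first by rewrite !mxE eqxx /= subr0 !mul1r mul0r subr0.
  by move=> k nk; rewrite mxE eq_sym (negPf nk) andbF subrr mul0r.
rewrite (bigD1 i) //= (bigD1 (0 : 'I_N)) 1?eq_sym //= big1 ?addr0.
  rewrite !mxE eqxx ni (negPf ni) /= !subr0 !mul1r sub0r mulN1r.
  by [].
move=> k /andP [ki k0]; rewrite mxE eq_sym (negPf ki) (negPf k0) /= subrr mul0r.
by [].
Qed.

Lemma det_Tm : \det Tm = 1.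
Proof.
rewrite det_trig; last first.
  apply/is_trig_mxP => i j lij; rewrite mxE.
  have -> : (j == 0) = false by apply/negP => /eqP j0; move: lij; rewrite j0.
  have -> : (i == j) = false by apply/negP => /eqP ij; move: lij; rewrite ij ltnn.
  by [].
by rewrite big1 // => i _; rewrite mxE eqxx; case: ifP.
Qed.

Lemma det_Lm : \det Lm = 1.
Proof.
rewrite det_trig; last first.
  apply/is_trig_mxP => i j lij; rewrite mxE.
  have -> : (j == 0) = false by apply/negP => /eqP j0; move: lij; rewrite j0.
  have -> : (i == j) = false by apply/negP => /eqP ij; move: lij; rewrite ij ltnn.
  by rewrite subrr.
by rewrite big1 // => i _; rewrite mxE eqxx andbN subr0.
Qed.

Lemma det_rank1 (D : 'M[R0]_N) (b : 'rV[R0]_N) a :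
  D *m (const_mx 1 : 'cV[R0]_N) = a *: const_mx 1 ->
  \det (D + (const_mx 1 : 'cV[R0]_N) *m b) * a =
  \det D * (a + (b *m (const_mx 1 : 'cV[R0]_N)) 0 0).
Proof.
move=> De.
set D' := D + _.
have rs i : \sum_k D i k = a.
  by have := congr1 (fun M : 'cV[R0]_N => M i 0) De; rewrite !mxE mulr1 => <-; apply: eq_bigr => k _; rewrite mxE mulr1.
set s := (b *m const_mx 1) 0 0.
have rs' i : \sum_k D' i k = a + s.
  rewrite /s !mxE -(rs i) -big_split /=; apply: eq_bigr => k _.
  by rewrite !mxE big_ord1 !mxE mul1r mulr1.
have dX (Y : 'M[R0]_N) : \det Y = \det (Lm *m Y *m Tm).
  by rewrite !det_mulmx det_Lm det_Tm mul1r mulr1.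
have ex (Y : 'M[R0]_N) c : (forall i, \sum_k Y i k = c) ->
    \det (Lm *m Y *m Tm) = c * \det (row' 0 (col' 0 (Lm *m Y *m Tm))).
  move=> Yc.
  have sL i : \sum_k (Lm *m Y) i k = c - (i != 0)%:R * c.
    rewrite -{1}(Yc i) -{1}(Yc 0) mulr_sumr -sumrB; apply: eq_bigr => k _; exact: mulLE.
  rewrite (expand_det_col _ 0) (bigD1 0) //= big1 ?addr0.
    by rewrite /cofactor mulTE eqxx /= sL eqxx mul0r subr0 addn0 expr0 mul1r.
  by move=> i ni; rewrite mulTE eqxx sL ni mul1r subrr mul0r.
have rowEq : row' 0 (col' 0 (Lm *m D' *m Tm)) = row' 0 (col' 0 (Lm *m D *m Tm)).
  apply/matrixP => i j.
  have e (Y : 'M[R0]_N) : row' 0 (col' 0 Y) i j = Y (lift 0 i) (lift 0 j) by rewrite !mxE.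
  rewrite !e !mulTE.
  have -> : (lift 0 j == 0) = false by apply/negP => /eqP/(congr1 val).
  rewrite !mulLE !mxE !big_ord1 !mxE !mul1r.
  by rewrite opprD addrACA subrr addr0.
rewrite (dX D') (dX D) (ex _ _ rs') (ex _ _ rs) rowEq.
set K := \det _; ring.
Qed.
End Rank1.
Lemma seq_max (C : numDomainType) (I : eqType) (f : I -> C) (s : seq I) :
  (forall i, f i \is Num.real) -> s != [::] ->
  exists2 p, p \in s & forall k, k \in s -> f k <= f p.
Proof.
move=> fr; elim: s => [//|x s IH] _.
case: s IH => [|y s] IH.
  by exists x; rewrite ?inE // => k; rewrite inE => /eqP ->.
have [p ps pm] := IH isT.
have /orP [le|le] := real_leVge (fr x) (fr p).
  exists p; first by rewrite inE ps orbT.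
  by move=> k; rewrite inE => /orP [/eqP ->|]; [exact: le | exact: pm].
exists x; first by rewrite inE eqxx.
move=> k; rewrite inE => /orP [/eqP ->|/pm kp]; first by [].
exact: le_trans kp le.
Qed.

Lemma fin_max (C : numDomainType) (I : finType) (P : pred I) (f : I -> C) :
  (forall i, f i \is Num.real) -> (exists i, P i) ->
  exists2 p, P p & forall k, P k -> f k <= f p.
Proof.
move=> fr [i Pi].
have [|p] := @seq_max C I f [seq j <- enum I | P j] fr.
  apply/eqP => e.
  have : i \in [seq j <- enum I | P j] by rewrite mem_filter Pi mem_enum.
  by rewrite e.
rewrite mem_filter => /andP [Pp _] pm; exists p => // k Pk.
by apply: pm; rewrite mem_filter Pk mem_enum.
Qed.

Lemma row_bound (C : numClosedFieldType) n (M : 'M[C]_n) (x : 'rV[C]_n) y j c :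
  x *m M = y *: x -> (forall i, i != j -> `|x 0 i| <= c) ->
  `|y - M j j| * `|x 0 j| <= c * deleted_row_sum M^T j.
Proof.
move=> E B.
have ej : (y - M j j) * x 0 j = \sum_(i | i != j) x 0 i * M i j.
  have := congr1 (fun N : 'rV[C]_n => N 0 j) E; rewrite !mxE (bigD1 j) //= => h.
  by rewrite mulrBl -h; ring.
rewrite -normrM ej /deleted_row_sum mulr_sumr.
apply: le_trans (ler_norm_sum _ _ _) _.
apply: ler_sum => i ij; rewrite mxE normrM; apply: ler_wpM2r => //; exact: B.
Qed.

Lemma brauerT (C : numClosedFieldType) n (M : 'M[C]_n) (x : 'rV[C]_n) y :
  (1 < n)%N -> x != 0 -> x *m M = y *: x -> ostrowski_brauer M^T y.
Proof.
move=> n2 x0 E.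
have fr : forall i, `|x 0 i| \is Num.real by move=> i; exact: normr_real.
pose i0 : 'I_n := Ordinal (ltnW n2).
pose i1 : 'I_n := Ordinal n2.
have [p _ pm] := @fin_max C _ predT _ fr (ex_intro _ i0 isT).
have [q qp qm] : exists2 q, q != p & forall k, k != p -> `|x 0 k| <= `|x 0 q|.
  apply: (@fin_max C _ (fun k => k != p) _ fr).
  case: (eqVneq p i0) => [->|ne]; first by exists i1.
  by exists i0; rewrite eq_sym.
have xp : 0 < `|x 0 p|.
  case: (pickP (fun i => x 0 i != 0)) => [i xi | h].
    by apply: lt_le_trans (pm i isT); rewrite normr_gt0.
  case/eqP: x0; apply/rowP => i; rewrite mxE; move/negbFE: (h i) => /eqP //.
set rp := deleted_row_sum M^T p.
set rq := deleted_row_sum M^T q.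
have rp0 : 0 <= rp by apply: sumr_ge0 => i _.
have rq0 : 0 <= rq by apply: sumr_ge0 => i _.
have h1 := @row_bound C n M x y p _ E qm.
have h2 := @row_bound C n M x y q _ E (fun i _ => pm i isT).
rewrite -/rp in h1; rewrite -/rq in h2.
have key : `|y - M p p| * `|y - M q q| <= rp * rq.
  have [xq0|xq0] := eqVneq (`|x 0 q|) 0.
    rewrite xq0 mul0r in h1.
    have a0 : `|y - M p p| = 0.
      apply/eqP; rewrite eq_le normr_ge0 andbT.
      by rewrite -(pmulr_lle0 _ xp).
    by rewrite a0 mul0r mulr_ge0.
  have xq : 0 < `|x 0 q| by rewrite lt_def xq0 normr_ge0.
  rewrite -(ler_pM2r (mulr_gt0 xp xq)).
  have e1 : `|y - M p p| * `|y - M q q| * (`|x 0 p| * `|x 0 q|) =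
     (`|y - M p p| * `|x 0 p|) * (`|y - M q q| * `|x 0 q|) by ring.
  have e2 : rp * rq * (`|x 0 p| * `|x 0 q|) =
     (`|x 0 q| * rp) * (`|x 0 p| * rq) by ring.
  rewrite e1 e2; apply: ler_pM => //; by rewrite mulr_ge0.
case: (ltngtP p q) => [lpq|lqp|epq].
- by exists p, q; split=> //; rewrite !mxE.
- by exists q, p; split=> //; rewrite !mxE mulrC [rq * _]mulrC.
- by case/eqP: qp; apply: val_inj.
Qed.

Lemma char_poly_tr (R : comNzRingType) n (M : 'M[R]_n) : char_poly M^T = char_poly M.
Proof.
rewrite /char_poly -det_tr; congr (\det _); apply/matrixP => i j.
by rewrite /char_poly_mx !mxE eq_sym.
Qed.

Lemma root_brauer (C : numClosedFieldType) n (M : 'M[C]_n) y :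
  (1 < n)%N -> root (char_poly M) y ->
  ostrowski_brauer M y /\ ostrowski_brauer M^T y.
Proof.
move=> n2 r; split.
  rewrite -char_poly_tr -eigenvalue_root_char in r.
  case/eigenvalueP: r => x E x0; rewrite -[M]trmxK; exact: brauerT E.
rewrite -eigenvalue_root_char in r.
case/eigenvalueP: r => x E x0; exact: brauerT E.
Qed.

Lemma char_poly_sim (F : fieldType) n (A S : 'M[F]_n) :
  S \in unitmx -> char_poly (invmx S *m A *m S) = char_poly A.
Proof.
move=> Su.
set P := map_mx polyC S; set Q := map_mx polyC (invmx S).
have QP : Q *m P = 1%:M by rewrite -map_mxM mulVmx // map_mx1.
rewrite /char_poly.
have -> : char_poly_mx (invmx S *m A *m S) = Q *m char_poly_mx A *m P.
  rewrite /char_poly_mx !map_mxM mulmxBr mulmxBl -/Q -/P mul_mx_scalar.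
  by rewrite -scalemxAl QP scalemx1.
by rewrite !det_mulmx mulrAC -det_mulmx QP det1 mul1r.
Qed.

Lemma core (R : rcfType) n (B : 'M[R]_n) (lam1 : R) (beta : 'I_n -> R)
  (lam : seq R[i]) :
  B *m (const_mx 1 : 'cV[R]_n) = lam1 *: const_mx 1 ->
  char_poly (cmx B) = \prod_(x <- lam) ('X - x%:P) -> lam`_0 = (lam1%:C)%C ->
  forall k, (1 <= k < n)%N ->
  root (char_poly (cmx (\matrix_(i, j) (B i j - beta j)))) lam`_k.
Proof.
move=> HB Hc H0 k /andP [k1 kn].
case: n B beta HB Hc k1 kn => [|n] B beta HB Hc k1 kn; first by [].
have rs i : \sum_l B i l = lam1.
  have := congr1 (fun M : 'cV[R]_n.+1 => M i 0) HB; rewrite !mxE mulr1 => <-.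
  by apply: eq_bigr => j _; rewrite mxE mulr1.
pose a : {poly R[i]} := 'X - ((lam1%:C)%C)%:P.
pose b : 'rV[{poly R[i]}]_n.+1 := \row_j (((beta j)%:C)%C)%:P.
have De : char_poly_mx (cmx B) *m (const_mx 1 : 'cV[{poly R[i]}]_n.+1) = a *: const_mx 1.
  apply/matrixP => i j; rewrite !mxE mulr1.
  rewrite (eq_bigr (fun l => 'X *+ (i == l) - (((B i l)%:C)%C)%:P)); last first.
    by move=> l _; rewrite /char_poly_mx !mxE mulr1.
  rewrite sumrB (bigD1 i) //= big1 ?addr0; last by move=> l /negPf; rewrite eq_sym => ->.
  by rewrite eqxx -!rmorph_sum /= rs.
have D'E : char_poly_mx (cmx (\matrix_(i, j) (B i j - beta j))) =
    char_poly_mx (cmx B) + (const_mx 1 : 'cV[{poly R[i]}]_n.+1) *m b.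
  apply/matrixP => i j; rewrite /char_poly_mx !mxE big_ord1 !mxE mul1r.
  rewrite !rmorphB /=; ring.
have := @det_rank1 _ _ _ b a De.
rewrite -D'E -/(char_poly _) -/(char_poly _) Hc.
case: lam Hc H0 => [|x0 rest] Hc H0.
  by have := size_char_poly (cmx B); rewrite Hc big_nil size_poly1.
rewrite /= in H0; rewrite big_cons H0 -/a => e.
have a0 : a != 0 by rewrite polyXsubC_eq0.
have := size_char_poly (cmx B); rewrite Hc big_cons H0 -/a size_Mmonic ?monicXsubC ?monic_prod_XsubC //.
rewrite size_XsubC size_prod_XsubC add2n /= => /eqP; rewrite eqSS => /eqP sr.
have -> : char_poly (cmx (\matrix_(i, j) (B i j - beta j))) =
    \prod_(j <- rest) ('X - j%:P) * (a + (b *m (const_mx 1 : 'cV[{poly R[i]}]_n.+1)) 0 0).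
  by apply: (mulIf a0); rewrite e -mulrA mulrC -mulrA [(_ + _) * a]mulrC.
case: k k1 kn => [//|k] _ kn.
by rewrite rootM root_prod_XsubC /= mem_nth // -ltnS sr.
Qed.

Theorem theorem7 (R : rcfType) (n : nat) (A : 'M[R]_n) (lam1 : R)
  (v : 'cV[R]_n) (lam : seq R[i]) :
  A *m v = lam1 *: v ->
  (forall k : 'I_n, v k 0 != 0) ->
  char_poly (cmx A) = \prod_(x <- lam) ('X - x%:P) ->
  lam`_0 = (lam1%:C)%C ->
  let S := diag_mx v^T in
  let B := invmx S *m A *m S in
  (~~ odd n ->
     let F := \matrix_(i, j) (B i j - tth_largest n./2 (offdiag_col B j)) in
     forall k, (1 <= k < n)%N ->
       ostrowski_brauer (cmx F) lam`_k /\ ostrowski_brauer (cmx F^T) lam`_k)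
  /\
  (odd n -> (3 <= n)%N ->
     let beta := fun j => - tth_largest n.-1./2 (offdiag_col B j) in
     let gamma := fun j => - tth_largest n.+1./2 (offdiag_col B j) in
     let F := \matrix_(i, j) (B i j + beta j) in
     let G := \matrix_(i, j) (B i j + gamma j) in
     forall k, (1 <= k < n)%N ->
       [/\ ostrowski_brauer (cmx F) lam`_k, ostrowski_brauer (cmx F^T) lam`_k,
           ostrowski_brauer (cmx G) lam`_k & ostrowski_brauer (cmx G^T) lam`_k]).
Proof.
move=> HA hv Hc H0 S B.
have Su : S \in unitmx.
  rewrite unitmxE det_diag unitfE; apply/prodf_neq0 => i _; rewrite mxE; exact: hv.
have Se : S *m (const_mx 1 : 'cV[R]_n) = v.
  by apply/matrixP => i j; rewrite mul_diag_mx !mxE mulr1 (ord1 j).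
have HB : B *m (const_mx 1 : 'cV[R]_n) = lam1 *: const_mx 1.
  by rewrite /B -!mulmxA Se HA -scalemxAr -Se mulKmx.
have Hc' : char_poly (cmx B) = \prod_(x <- lam) ('X - x%:P).
  rewrite -Hc.
  have e1 (M : 'M[R]_n) : char_poly (cmx M) = map_poly (real_complex R) (char_poly M).
    by rewrite map_char_poly.
  by rewrite !e1 /B char_poly_sim.
have tr (M : 'M[R]_n) : cmx M^T = (cmx M)^T by apply/matrixP => i j; rewrite !mxE.
have gen (beta : 'I_n -> R) k : (1 <= k < n)%N ->
    ostrowski_brauer (cmx (\matrix_(i, j) (B i j - beta j))) lam`_k /\
    ostrowski_brauer (cmx (\matrix_(i, j) (B i j - beta j))^T) lam`_k.
  move=> kk; rewrite tr; apply: (@root_brauer _ n).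
    by case/andP: kk => k1 kn; apply: leq_ltn_trans kn.
  exact: (@core R n B lam1 beta lam HB Hc' H0 k kk).
split.
  by move=> _ F k kk; exact: (gen (fun j => tth_largest n./2 (offdiag_col B j)) k kk).
move=> _ _ beta gamma F G k kk.
have eF : F = \matrix_(i, j) (B i j - (fun j => - beta j) j).
  by rewrite /F /G /beta /gamma; apply/matrixP => i j; rewrite !mxE opprK.
have eG : G = \matrix_(i, j) (B i j - (fun j => - gamma j) j).
  by rewrite /F /G /beta /gamma; apply/matrixP => i j; rewrite !mxE opprK.
have [f1 f2] := gen (fun j => - beta j) k kk.
have [g1 g2] := gen (fun j => - gamma j) k kk.
clearbody F G; subst F G.
split; [exact: f1 | exact: f2 | exact: g1 | exact: g2].
Qed.
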